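(* Let $n\ge2$ and let $g_1,\dots,g_r\in\mathbb R[X_1,\dots,X_n]$ satisfy $1-\|\mathbf X\|_2^2\in\mathcal Q(\mathbf g)$ and $\|g_i\|\le\tfrac12$ for all $i$. Let $\mathfrak c\ge1,\textit{Ł}\ge1$ satisfy $D(x)^{\textit{Ł}}\le\mathfrak c\,G(x)$ on $[-1,1]^n$, and let $\gamma(n,\mathbf g)\ge1$ be a constant depending only on $n,\mathbf g$ such that every $h\in\mathbb R[\mathbf X]$ with $\min_S h>0$ lies in $\mathcal Q_\ell(\mathbf g)$ whenever $\ell\ge\gamma(n,\mathbf g)\,d(h)^{3.5n\textit{Ł}}\epsilon(h)^{-2.5n\textit{Ł}}$. Let $f\in\mathbb R[\mathbf X]$ with $f\ge0$ on $S$ and $f^*=\min_S f$. Then for every $0<\epsilon\le\|f\|$ we have $f-f^*+\epsilon\in\mathcal Q_\ell(\mathbf g)$ whenever $$\ell\ge\gamma'(n,\mathbf g)\,d(f)^{3.5n\textit{Ł}}\,\|f\|^{2.5n\textit{Ł}}\,\epsilon^{-2.5n\textit{Ł}},\qquad \gamma'(n,\mathbf g)=3^{2.5n\textit{Ł}}\gamma(n,\mathbf g).$$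
   Context: $\Sigma^2$ sums of squares; $S=\{x:g_i(x)\ge0\ \forall i\}$ (nonempty); $\mathcal Q(\mathbf g)=\Sigma^2+\sum_i\Sigma^2g_i$; $\mathcal Q_\ell(\mathbf g)=\{s_0+\sum_is_ig_i: s_j\in\Sigma^2,\deg s_0\le\ell,\deg(s_ig_i)\le\ell\}$; $\|h\|=\max_{[-1,1]^n}|h|$; $\|\mathbf X\|_2^2=\sum X_i^2$; $d(h)=\deg h$; $\epsilon(h)=\min_S h/\|h\|$; $G(x)=|\min\{g_1(x),\dots,g_r(x),0\}|$, $D(x)=\operatorname{dist}(x,S)$. *)

(* Defs.v *)
From mathcomp Require Import all_boot all_order all_algebra.
From mathcomp Require Import mpoly.
From mathcomp Require Import classical_sets reals exp.

Set Implicit Arguments. Unset Strict Implicit. Unset Printing Implicit Defensive.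
Import Order.TTheory GRing.Theory Num.Theory.
Local Open Scope ring_scope.
Local Open Scope classical_set_scope.

Section Defs.
Variables (R : realType) (n : nat).
Notation poly := {mpoly R[n]}.

Definition is_sos (p : poly) : Prop :=
  exists s : seq poly, p = \sum_(q <- s) q ^+ 2.

(* total degree d(h); msize p = 1 + total degree (0 for p = 0) *)
Definition deg (p : poly) : nat := (msize p).-1.

Definition cube (x : 'I_n -> R) : Prop := forall i, -1 <= x i <= 1.

Definition supnorm (h : poly) : R := sup [set `|h.@[x]| | x in cube].

Variable r : nat.
Variable g : 'I_r -> poly.

Definition semialg : set ('I_n -> R) := [set x | forall i, 0 <= (g i).@[x]].

Definition QM (p : poly) : Prop :=
  exists (s0 : poly) (s : 'I_r -> poly),
    [/\ is_sos s0, forall i, is_sos (s i) & p = s0 + \sum_i s i * g i].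

(* truncated quadratic module Q_l(g): deg s0 <= l, deg (s_i g_i) <= l *)
Definition QMtr (l : nat) (p : poly) : Prop :=
  exists (s0 : poly) (s : 'I_r -> poly),
    [/\ is_sos s0, forall i, is_sos (s i),
        (msize s0 <= l.+1)%N, forall i, (msize (s i * g i) <= l.+1)%N
      & p = s0 + \sum_i s i * g i].

Definition minS (h : poly) : R := inf [set h.@[x] | x in semialg].

Definition epsh (h : poly) : R := minS h / supnorm h.

Definition Gfun (x : 'I_n -> R) : R := `| \big[Num.min/0]_i (g i).@[x] |.

Definition distS (x : 'I_n -> R) : R :=
  inf [set Num.sqrt (\sum_i (x i - y i) ^+ 2) | y in semialg].

End Defs.

(* Main.v *)
Require Import Defs.
From mathcomp Require Import all_boot all_order all_algebra.
From mathcomp Require Import mpoly.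
From mathcomp Require Import classical_sets reals exp.
From mathcomp Require Import ring lra zify boolp.
Import Order.TTheory GRing.Theory Num.Theory.
Local Open Scope classical_set_scope.
Local Open Scope ring_scope.

Lemma meval_sum (R : realType) (n : nat) (I : Type) (rs : seq I) (F : I -> {mpoly R[n]}) x :
  (\sum_(i <- rs) F i).@[x] = \sum_(i <- rs) (F i).@[x].
Proof. exact: (big_morph _ (mevalD x) (meval0 x)). Qed.

Lemma sos_ge0 (R : realType) (n : nat) (p : {mpoly R[n]}) x :
  is_sos p -> 0 <= p.@[x].
Proof.
case=> s ->; rewrite meval_sum; apply: sumr_ge0 => q _.
by rewrite expr2 mevalM -expr2 sqr_ge0.
Qed.

Lemma S_cube (R : realType) (n r : nat) (g : 'I_r -> {mpoly R[n]}) x :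
  QM g (1 - \sum_(i < n) 'X_i ^+ 2) -> semialg g x -> cube x.
Proof.
case=> s0 [s [hs0 hs he]] Sx.
have H : 0 <= (1 - \sum_(i < n) 'X_i ^+ 2 : {mpoly R[n]}).@[x].
  rewrite he mevalD meval_sum; apply: addr_ge0; first exact: sos_ge0.
  apply: sumr_ge0 => i _; rewrite mevalM; apply: mulr_ge0; first exact: sos_ge0.
  exact: Sx.
move: H; rewrite mevalB meval1 meval_sum.
under eq_bigr => i _ do rewrite expr2 mevalM mevalXU -expr2.
move=> H i.
have : x i ^+ 2 <= 1.
  apply: le_trans (_ : \sum_(j < n) x j ^+ 2 <= 1); last by lra.
  by rewrite (bigD1 i) //= lerDl sumr_ge0 // => j _; rewrite sqr_ge0.
move=> hi; apply/andP; split; nra.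
Qed.

Lemma deg_shift (R : realType) (n : nat) (f : {mpoly R[n]}) a b :
  (deg (f - a%:MP + b%:MP) <= deg f)%N.
Proof.
rewrite /deg.
have h1 := msizeD_le (f - a%:MP) b%:MP.
have h2 := msizeD_le f (- a%:MP).
rewrite msizeN msizeC in h2; rewrite msizeC in h1.
move: h1 h2; case: (a != 0); case: (b != 0) => /= h1 h2; lia.
Qed.

Theorem mainTheorem4 (R : realType) (n r : nat) (g : 'I_r -> {mpoly R[n]})
    (c L gamma : R) (f : {mpoly R[n]}) :
  (2 <= n)%N ->
  (exists x, semialg g x) ->
  QM g (1 - \sum_(i < n) 'X_i ^+ 2) ->
  (forall i, supnorm (g i) <= 1 / 2) ->
  1 <= c -> 1 <= L ->
  (forall x, cube x -> powR (distS g x) L <= c * Gfun g x) ->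
  1 <= gamma ->
  (forall h : {mpoly R[n]}, 0 < minS g h -> forall l : nat,
      gamma * powR (deg h)%:R (7 / 2 * n%:R * L)
            * powR (epsh g h) (- (5 / 2 * n%:R * L)) <= l%:R ->
      QMtr g l h) ->
  (forall x, semialg g x -> 0 <= f.@[x]) ->
  forall eps : R, 0 < eps -> eps <= supnorm f ->
  forall l : nat,
    (powR 3 (5 / 2 * n%:R * L) * gamma) * powR (deg f)%:R (7 / 2 * n%:R * L)
      * powR (supnorm f) (5 / 2 * n%:R * L)
      * powR eps (- (5 / 2 * n%:R * L)) <= l%:R ->
    QMtr g l (f - (minS g f)%:MP + eps%:MP).
Proof.
move=> n2 [x0 Sx0] hQM _ _ L1 _ g1 hyp fpos eps eps0 epsF l hl.
have Cx0 : cube x0 := @S_cube _ _ _ g x0 hQM Sx0.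
set F := supnorm f in epsF hl.
set fs := minS g f.
set h := f - fs%:MP + eps%:MP.
have hsupF : has_sup [set `|f.@[x]| | x in @cube R n].
  apply: contrapT => hns; move: epsF; rewrite /F /supnorm sup_out //; lra.
have fleF : forall x, cube x -> `|f.@[x]| <= F.
  by move=> x cx; apply: (ub_le_sup hsupF.2); exists x.
have Fm_lb : has_lbound [set f.@[x] | x in @semialg R n r g].
  by exists 0 => _ [x Sx <-]; exact: fpos.
have fsle : forall x, semialg g x -> fs <= f.@[x].
  by move=> x Sx; apply: (ge_inf Fm_lb); exists x.
have fs0 : 0 <= fs.
  by apply: lb_le_inf; [exists (f.@[x0]), x0 | move=> _ [x Sx <-]; exact: fpos].
have fsF : fs <= F.
  apply: le_trans (fsle _ Sx0) _; apply: le_trans (fleF _ Cx0); exact: ler_norm.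
have hev : forall x, h.@[x] = f.@[x] - fs + eps.
  by move=> x; rewrite /h mevalD mevalB !mevalC.
have mh : eps <= minS g h.
  apply: lb_le_inf; first by exists (h.@[x0]), x0.
  move=> _ [x Sx <-]; rewrite hev; have := fsle _ Sx; lra.
have mh0 : 0 < minS g h by apply: (lt_le_trans eps0 mh).
have hHb : forall x, cube x -> `|h.@[x]| <= 3 * F.
  move=> x cx; rewrite hev; have := fleF _ cx.
  have := ler_normD (f.@[x] - fs) eps; have := ler_normB (f.@[x]) fs.
  rewrite (ger0_norm fs0) (gtr0_norm eps0); lra.
have Hub : has_ubound [set `|h.@[x]| | x in @cube R n].
  by exists (3 * F) => _ [x cx <-]; exact: hHb.
have hF : supnorm h <= 3 * F.
  apply: ge_sup; first by exists `|h.@[x0]|, x0.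
  by move=> _ [x cx <-]; exact: hHb.
have hge : eps <= supnorm h.
  apply: le_trans (ub_le_sup Hub _) ; last by exists x0.
  rewrite hev; have := fsle _ Sx0; move=> H.
  rewrite ger0_norm; lra.
have F0 : 0 < F by apply: lt_le_trans eps0 epsF.
apply: hyp => //.
set A := 7 / 2 * n%:R * L; set B := 5 / 2 * n%:R * L.
have B0 : 0 < B.
  rewrite /B; apply: mulr_gt0; last lra.
  apply: mulr_gt0; first lra.
  by rewrite ltr0n; lia.
have A0 : 0 <= A.
  rewrite /A; apply: mulr_ge0; last lra.
  by apply: mulr_ge0; [lra | exact: ler0n].
apply: le_trans hl.
have e1 : eps / (3 * F) <= epsh g h.
  rewrite /epsh; apply: (@le_trans _ _ (eps / supnorm h)).
    rewrite ler_pM2l // lef_pV2 ?posrE //; lra.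
  rewrite ler_pM2r ?invr_gt0; [exact: mh | lra].
have e0 : 0 < eps / (3 * F) by apply: divr_gt0; lra.
have p1 : powR (epsh g h) (- B) <= powR 3 B * powR F B * powR eps (- B).
  have key : powR (eps / (3 * F)) B * (powR 3 B * powR F B) = powR eps B.
    rewrite -powRM ?(ltW e0) //; last lra.
    rewrite -powRM //; last lra; last exact: ltW.
    congr powR; field; lra.
  rewrite !powRN.
  have u0 : 0 < powR (eps / (3 * F)) B by exact: powR_gt0.
  apply: (@le_trans _ _ (powR (eps / (3 * F)) B)^-1).
    rewrite lef_pV2 ?posrE ?powR_gt0 //; last exact: lt_le_trans e0 e1.
    apply: ge0_ler_powR; [exact: ltW | rewrite nnegrE; exact: ltW | rewrite nnegrE; apply: ltW; exact: lt_le_trans e0 e1 | exact: e1].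
  have q0 : 0 < powR 3 B * powR F B by apply: mulr_gt0; apply: powR_gt0; lra.
  rewrite -key; set u := powR (eps / (3 * F)) B; set q := powR 3 B * powR F B.
  by rewrite invfM mulrCA mulfV ?mulr1 // gt_eqF.
have p2 : powR (deg h)%:R A <= powR (deg f)%:R A.
  by apply: ge0_ler_powR; rewrite ?nnegrE ?ler0n ?ler_nat ?deg_shift.
rewrite -/A -/B.
apply: (@le_trans _ _ (gamma * powR (deg f)%:R A * (powR 3 B * powR F B * powR eps (- B)))).
  apply: ler_pM => //; [ | exact: powR_ge0 | ].
    by apply: mulr_ge0; [lra | exact: powR_ge0].
  by apply: ler_wpM2l => //; lra.
rewrite le_eqVlt; apply/orP; left; apply/eqP; ring.
Qed.
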